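(* Let $G=([n],E)$ be any graph and $F$ any atomless distribution on $[0,\infty)$. For every price vector $\mathbf{p}=(p_1,\dots,p_n)$ with $p_i>0$ and every equilibrium $\mathbf{T}\in\mathcal{N}_{\mathbf{p}}$, $$\mathcal{R}(\mathbf{p},\mathbf{T})\le \mathbb{E}\Big[\max_{I\subseteq[n]\text{ independent in }G}\ \sum_{i\in I} v_i\Big],$$ where $v_1,\dots,v_n$ are i.i.d. with distribution $F$.
   Context: Public-goods pricing game: there are $n$ buyers, the vertices of an undirected graph $G=([n],E)$; $N(i)=\{j:(i,j)\in E\}$ (so $i\notin N(i)$). Buyer $i$ has private value $v_i$; the $v_i$ are i.i.d. with atomless cumulative distribution function $F$ on $[0,\infty)$, extended by $F(\infty)=1$. If $S$ is the set of buyers who purchase and $\pi_i$ is $i$'s payment, $i$'s utility is $v_i-\pi_i$ if $i\in S$ or $S\cap N(i)\neq\emptyset$, and $-\pi_i$ otherwise; a buyer pays $p_i$ iff he purchases. An equilibrium for the price vector $\mathbf{p}$ is a threshold vector $\mathbf{T}=(T_1,\dots,T_n)\in[0,\infty]^n$ (buyer $i$ purchases iff $v_i\ge T_i$) satisfying $T_i=p_i/\prod_{j\in N(i)}F(T_j)$ for all $i$ (convention $c/0=\infty$ for $c>0$). $\mathcal{N}_{\mathbf{p}}$ denotes the set of equilibria. The expected revenue is $\mathcal{R}(\mathbf{p},\mathbf{T})=\sum_i p_i(1-F(T_i))$. *)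

(* Defs.v *)
From HB Require Import structures.
From mathcomp Require Import all_boot all_order all_algebra.
From mathcomp Require Import all_classical all_reals all_analysis.
Set Implicit Arguments. Unset Strict Implicit. Unset Printing Implicit Defensive.
Import Order.TTheory GRing.Theory Num.Theory.
Local Open Scope classical_set_scope.
Local Open Scope ring_scope.

(* A simple undirected graph on [n] = 'I_n given by a symmetric irreflexive
   adjacency relation; N(i) = [set j | e i j]. *)
Definition simple_graph (n : nat) (e : rel 'I_n) : Prop :=
  (forall i j, e i j = e j i) /\ (forall i, ~~ e i i).

Definition independent (n : nat) (e : rel 'I_n) (I : {set 'I_n}) : bool :=
  [forall i in I, forall j in I, ~~ e i j].

Definition Fext (R : realType) (F : R -> R) (x : \bar R) : R :=
  match x with
  | EFin r => F r
  | +oo%E => 1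
  | -oo%E => 0
  end.

Definition is_equilibrium (R : realType) (n : nat) (e : rel 'I_n)
    (F : R -> R) (p : 'I_n -> R) (T : 'I_n -> \bar R) : Prop :=
  forall i, (0 <= T i)%E /\
    T i = (let q := \prod_(j | e i j) Fext F (T j) in
           if q == 0 then +oo%E else (p i / q)%:E).

Definition revenue (R : realType) (n : nat) (F : R -> R)
    (p : 'I_n -> R) (T : 'I_n -> \bar R) : R :=
  \sum_(i < n) p i * (1 - Fext F (T i)).

(* Mutual independence of the real random variables v_1, ..., v_n:
   product rule for every family of Borel sets (taking B_i = setT for
   unused indices gives the product rule for all subfamilies). *)
Definition mutually_independent d (T : measurableType d) (R : realType)
    (P : probability T R) (n : nat) (v : 'I_n -> T -> R) : Prop :=
  forall B : 'I_n -> set R, (forall i, measurable (B i)) ->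
    P (\bigcap_i (v i @^-1` B i)) = (\prod_(i < n) P (v i @^-1` B i))%E.

(* max over independent sets I of sum_{i in I} v_i (the empty set is
   independent, so 0 as neutral element is harmless). *)
Definition max_indep_value (R : realType) (n : nat) (e : rel 'I_n)
    (x : 'I_n -> R) : R :=
  \big[Num.max/0]_(I : {set 'I_n} | independent e I) \sum_(i in I) x i.

(* Main.v *)
Require Import Defs.
From HB Require Import structures.
From mathcomp Require Import all_boot all_order all_algebra.
From mathcomp Require Import all_classical all_reals all_analysis.
From mathcomp Require Import measurable_realfun.
From mathcomp Require Import ring lra.
Import Order.TTheory GRing.Theory Num.Theory.
Import numFieldNormedType.Exports.
Local Open Scope classical_set_scope.
Local Open Scope ring_scope.

Lemma meas_maxindep (R : realType) (n : nat) (e : rel 'I_n) (d : measure_display) (Omega : measurableType d)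
    (P : probability Omega R) (v : 'I_n -> {RV P >-> R}) :
  measurable_fun setT (fun w => max_indep_value e (fun i => v i w)).
Proof.
rewrite /max_indep_value.
suff H : forall s, measurable_fun setT (fun w =>
   \big[Num.max/0]_(I <- s | independent e I) \sum_(i in I) v i w) by exact: H.
elim => [|I s ih].
  under eq_fun => w do rewrite big_nil; exact: measurable_cst.
under eq_fun => w do rewrite big_cons.
case: (independent e I); last exact: ih.
apply: measurable_maxr => //.
under eq_fun => w do rewrite big_mkcond.
apply: measurable_sum => i.
case: (i \in I); last exact: measurable_cst.
exact: measurable_funPT.
Qed.

Theorem mainTheorem1 (R : realType) (n : nat) (e : rel 'I_n)
    (F : R -> R) (d : measure_display) (Omega : measurableType d)
    (P : probability Omega R) (v : 'I_n -> {RV P >-> R})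
    (p : 'I_n -> R) (T : 'I_n -> \bar R) :
  simple_graph e ->
  (* F is an atomless distribution on [0, oo) *)
  continuous F -> (forall x, x < 0 -> F x = 0) ->
  (* v_1, ..., v_n are i.i.d. with cdf F *)
  mutually_independent P (fun i => (v i : Omega -> R)) ->
  (forall i x, P [set w | v i w <= x] = (F x)%:E) ->
  (* positive prices and an equilibrium T for p *)
  (forall i, 0 < p i) ->
  is_equilibrium e F p T ->
  ((revenue F p T)%:E <= 'E_P[fun w => max_indep_value e (fun i => v i w)])%E.
Proof.
move=> [esym eirr] _ _ Hind Hcdf pp Heq.
have Tnn : forall k, (0 <= T k)%E by move=> k; case: (Heq k).
pose c i := fine (T i).
have c0 : forall i, 0 <= c i by move=> i; exact: fine_ge0.
pose leT k (x : R) := match T k with EFin t => x <= t | _ => true end.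
pose good i w := (c i < v i w) && [forall k, e i k ==> leT k (v k w)].
pose A i := [set w | good i w].
pose B i k := if k == i then [set x | c i < x]
  else if e i k then (match T k with EFin t => [set x | x <= t] | _ => setT end)
  else setT.
have mB : forall i k, measurable (B i k).
  move=> i k; rewrite /B; case: eqP => _.
    by rewrite -set_itvoy; exact: measurable_itv.
  case: (e i k); last exact: measurableT.
  case: (T k) => [t| |]; try exact: measurableT.
  by rewrite -set_itvNyc; exact: measurable_itv.
have AE : forall i, A i = \bigcap_k (v k @^-1` B i k).
  move=> i; apply/seteqP; split => w /=.
    move=> /andP[h1 /forallP h2] k _ /=; rewrite /B; case: eqP => [->//|_].
    case: ifP => // eik; have := implyP (h2 k) eik.
    by rewrite /leT; case: (T k).
  move=> H; apply/andP; split.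
    by have := H i Logic.I; rewrite /B eqxx.
  apply/forallP => k; apply/implyP => eik.
  have := H k Logic.I; rewrite /B eik; case: eqP => [ki|_].
    by move: eik; rewrite ki (negbTE (eirr i)).
  by rewrite /leT; case: (T k).
have mA : forall i, measurable (A i).
  move=> i; rewrite AE; apply: fin_bigcap_measurable; first exact: finite_finset.
  move=> k _.
  exact: measurable_funPTI.
have PA : forall i r, T i = r%:E ->
    P (A i) = ((1 - F r) * \prod_(k | e i k) Fext F (T k))%:E.
  move=> i r Ti; rewrite AE (Hind (B i)) //.
  rewrite (bigD1 i) //=.
  have -> : P (v i @^-1` B i i) = (1 - F r)%:E.
    rewrite /B eqxx /c Ti /=.
    have -> : v i @^-1` [set x | r < x] = ~` [set w | v i w <= r].
      apply/seteqP; split => w /=; first by rewrite ltNge => /negP.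
      by move/negP; rewrite -ltNge.
    rewrite probability_setC; last first.
      by have := measurable_funPTI (v i) (measurable_itv `]-oo, r]); rewrite set_itvNyc.
    by rewrite Hcdf.
  have Pk : forall k, k != i -> P (v k @^-1` B i k) = (if e i k then Fext F (T k) else 1)%:E.
    move=> k ki; rewrite /B (negbTE ki); case: (e i k).
      have := Tnn k; case: (T k) => [t| |] //= _.
      - by rewrite Hcdf.
      - by rewrite preimage_setT probability_setT.
    by rewrite preimage_setT probability_setT.
  rewrite (eq_bigr _ Pk) prodEFin -EFinM; congr (_ * _)%:E.
  rewrite [RHS]big_mkcond [LHS]big_mkcond; apply: eq_bigr => k _.
  case: eqP => [->|_] //=; first by rewrite (negbTE (eirr i)).
have pw : forall w, \sum_i c i * \1_(A i) w <= max_indep_value e (fun i => v i w).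
  move=> w.
  pose S : {set 'I_n} := finset (fun i => (T i \is a fin_num) && good i w).
  have indS : independent e S.
    apply/forallP => i; apply/implyP; rewrite inE => /andP[_ /andP[_ /forallP gi]].
    apply/forallP => j; apply/implyP; rewrite inE => /andP[fj /andP[gj _]].
    apply/negP => eij; have := implyP (gi j) eij.
    move: gj; rewrite /leT /c; case: (T j) fj => [t| |] //= _ h1 h2.
    by have := lt_le_trans h1 h2; rewrite ltxx.
  apply: (@le_trans _ _ (\sum_(i in S) v i w)).
    rewrite [X in _ <= X]big_mkcond; apply: ler_sum => i _.
    rewrite indicE inE; have [gw|ngw] := boolP (good i w).
      rewrite mem_set // mulr1 andbT.
      move: gw; rewrite /good /c; case: (T i) => [t| |] /=.
      - by move=> /andP[h _]; exact: ltW.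
      - by [].
      - by [].
    have nA : ~ A i w by apply/negP.
    rewrite memNset // mulr0n mulr0; by case: (T i \is a fin_num).
  by rewrite /max_indep_value (bigD1 S) //= le_max lexx.
have mI : forall i, measurable_fun setT (fun w => c i * \1_(A i) w).
  move=> i; apply: measurable_funM; first exact: measurable_cst.
  exact: measurable_indic.
have I0 : forall i w, 0 <= c i * \1_(A i) w.
  by move=> i w; apply: mulr_ge0 => //; rewrite indicE.
rewrite unlock.
apply: (@le_trans _ _ (\int[P]_w (\sum_i c i * \1_(A i) w)%:E)%E).
  have -> : (\int[P]_w (\sum_i c i * \1_(A i) w)%:E =
      \sum_i \int[P]_w (c i * \1_(A i) w)%:E)%E.
    under eq_integral => w _ do rewrite -sumEFin.
    apply: ge0_integral_sum => //.
      by move=> i; apply/measurable_EFinP; exact: mI.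
    by move=> i w _; rewrite lee_fin.
  rewrite /revenue -sumEFin le_eqVlt; apply/orP; left; apply/eqP.
  apply: eq_bigr => i _.
  under eq_integral => w _ do rewrite EFinM.
  rewrite ge0_integralZl //; last by rewrite lee_fin.
    rewrite integral_indic // setIT.
    have [_ Hi] := Heq i.
    case Ti: (T i) Hi => [r| |] Hi.
    - move: Hi => /=; case: eqP => // qn0 [rE].
      rewrite (PA i r Ti) /c Ti /= -EFinM; congr EFin; rewrite rE.
      by field; apply/eqP.
    - by rewrite /c Ti /= subrr mulr0 mul0e.
    - by have := Tnn i; rewrite Ti.
    - by apply/measurable_EFinP; exact: measurable_indic.
apply: ge0_le_integral => //.
- by move=> w _; rewrite lee_fin; apply: sumr_ge0 => i _.
- by apply/measurable_EFinP; apply: measurable_sum => i; exact: mI.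
- by apply/measurable_EFinP; exact: meas_maxindep.
- by move=> w _; rewrite lee_fin; exact: pw.
Qed.
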